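(* Let $m,n\ge1$ and let $\lambda\subseteq\nu\subseteq(n-1)^{m-1}$ be partitions. For $X\in\mathrm{PASM}(\nu/\lambda,m,n)$ let $c_{ij}=\sum_{i'\le i,\,j'\le j}X_{i'j'}$ and let $\Psi(X)$ be the function $g_X$ on $P(\nu/\lambda)$ given by $g_X(i,j)=c_{ij}$. Then $\Psi(X)$ lies in the order polytope $\mathcal{O}(P(\nu/\lambda))$ for every $X\in\mathrm{PASM}(\nu/\lambda,m,n)$.
   Context: A partition $\mu=(\mu_1\ge\mu_2\ge\cdots)$ is a weakly decreasing sequence of nonnegative integers with finitely many nonzero terms, identified with the set of positions $\{(i,j):i\ge1,1\le j\le\mu_i\}$; $\mu\subseteq\nu$ means $\mu_i\le\nu_i$ for all $i$, and $\mu\subseteq a^b$ means $\mu$ has at most $b$ positive parts and $\mu_1\le a$. For $\mu\subseteq(n-1)^{m-1}$, the $m\times n$ matrix $M^\mu$ has entries $M^\mu_{1,\mu_1+1}=1$; for each $1\le k\le m-1$ with $\mu_k>\mu_{k+1}$, $M^\mu_{k+1,\mu_{k+1}+1}=1$ and $M^\mu_{k+1,\mu_k+1}=-1$; all other entries $0$. $\mathrm{PASM}(\nu/\lambda,m,n)$ is the convex hull in $\mathbb{R}^{mn}$ of $\{M^\mu:\lambda\subseteq\mu\subseteq\nu\}$. $P(\nu/\lambda)$ is the poset whose elements are the positions $(i,j)$ in $\nu$ but not in $\lambda$, ordered by $(i,j)\le(i',j')$ iff $i\le i'$ and $j\le j'$. For a finite poset $P$, the order polytope $\mathcal{O}(P)$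 is the set of functions $f:P\to\mathbb{R}$ with $0\le f(p)\le1$ for all $p$ and $f(p)\le f(q)$ whenever $p\le q$. *)

(* Defs.v *)
From HB Require Import structures.
From mathcomp Require Import all_boot all_order all_algebra.
Set Implicit Arguments. Unset Strict Implicit. Unset Printing Implicit Defensive.
Import Order.TTheory GRing.Theory Num.Theory.
Local Open Scope ring_scope.

(* Conventions: all indices are 0-based.  A partition mu is a function
   nat -> nat with mu i = mu_{i+1} (the (i+1)-st part in the paper). *)

Definition is_partition (mu : nat -> nat) : Prop :=
  (forall i, (mu i.+1 <= mu i)%N) /\ exists N, forall i, (N <= i)%N -> mu i = 0%N.

Definition part_sub (mu nu : nat -> nat) : Prop := forall i, (mu i <= nu i)%N.

Definition part_in_box (mu : nat -> nat) (a b : nat) : Prop :=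
  (mu 0 <= a)%N /\ forall i, (b <= i)%N -> mu i = 0%N.

(* The m x n matrix M^mu (0-based): row 0 has a 1 in column mu_1;
   row k (k >= 1, i.e. paper's row k+1) has, if mu_k > mu_{k+1},
   a 1 in column mu_{k+1} and a -1 in column mu_k. *)
Definition Mmat (R : pzRingType) (m n : nat) (mu : nat -> nat) : 'M[R]_(m, n) :=
  \matrix_(i < m, j < n)
    if (i == 0 :> nat) then ((j == mu 0%N :> nat)%:R : R)
    else if (mu i.-1 > mu i)%N then
      ((j == mu i :> nat)%:R - (j == mu i.-1 :> nat)%:R : R)
    else 0.

Definition in_PASM (R : realFieldType) (m n : nat) (lam nu : nat -> nat)
    (X : 'M[R]_(m, n)) : Prop :=
  exists (k : nat) (mus : 'I_k -> nat -> nat) (w : 'I_k -> R),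
    [/\ forall t, 0 <= w t,
        \sum_(t < k) w t = 1,
        forall t, is_partition (mus t) /\ part_sub lam (mus t) /\ part_sub (mus t) nu
      & X = \sum_(t < k) w t *: Mmat R m n (mus t)].

(* Elements of P(nu/lambda): positions (i,j) (0-based) in nu but not in lambda,
   i.e. lambda_{i+1} <= j < nu_{i+1}. *)
Definition in_skew (m n : nat) (lam nu : nat -> nat) (p : 'I_m * 'I_n) : bool :=
  (lam p.1 <= p.2)%N && (p.2 < nu p.1)%N.

Definition pos_le (m n : nat) (p q : 'I_m * 'I_n) : bool :=
  (p.1 <= q.1)%N && (p.2 <= q.2)%N.

Definition in_order_polytope (R : realFieldType) (T : Type) (P : T -> bool)
    (le : T -> T -> bool) (f : T -> R) : Prop :=
  (forall p, P p -> 0 <= f p <= 1) /\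
  (forall p q, P p -> P q -> le p q -> f p <= f q).

Definition cumsum (R : pzRingType) (m n : nat) (X : 'M[R]_(m, n)) (p : 'I_m * 'I_n) : R :=
  \sum_(i' < m | (i' <= p.1)%N) \sum_(j' < n | (j' <= p.2)%N) X i' j'.

Definition Psi (R : pzRingType) (m n : nat) (X : 'M[R]_(m, n)) : 'I_m * 'I_n -> R :=
  cumsum X.

(* Main.v *)
Set Warnings "-all".
Require Import Defs.
From mathcomp Require Import all_boot all_order all_algebra.
Import Order.TTheory GRing.Theory Num.Theory.
Local Open Scope ring_scope.

Lemma sum_ind (R : pzRingType) (n a : nat) (P : pred 'I_n) (ha : (a < n)%N) :
  \sum_(j < n | P j) (((j == a :> nat))%:R : R) = (P (Ordinal ha))%:R.
Proof.
case hP: (P (Ordinal ha)).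
  rewrite (bigD1 (Ordinal ha)) //= eqxx big1 ?addr0 // => k /andP[_ hk].
  by case: eqP => // e; case/eqP: hk; apply: val_inj.
rewrite big1 // => k Pk.
have [e|//] := eqVneq (nat_of_ord k) a.
have ek : k = Ordinal ha by apply: val_inj.
by move: Pk; rewrite ek hP.
Qed.

Lemma tele (R : pzRingType) (m : nat) (G : 'I_m -> R) (f : nat -> R) :
  (forall i : 'I_m, G i = f i - (if i == 0 :> nat then 0 else f i.-1)) ->
  forall k, (k < m)%N -> \sum_(i < m | (i <= k)%N) G i = f k.
Proof.
move=> hG; elim=> [|k IH] hk.
  rewrite (bigD1 (Ordinal hk)) //= big1 ?addr0.
    by rewrite hG /= subr0.
  by move=> i /andP[]; rewrite leqn0 => /eqP e; case/eqP; apply: val_inj.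
rewrite (bigD1 (Ordinal hk)) //= (eq_bigl (fun i : 'I_m => (i <= k)%N)).
  by rewrite IH ?(ltnW hk) // hG /= subrK.
move=> i /=.
have -> : (i != Ordinal hk) = (nat_of_ord i != k.+1) by [].
by rewrite andbC -ltn_neqAle ltnS.
Qed.

Lemma part_mono (mu : nat -> nat) : (forall i, (mu i.+1 <= mu i)%N) ->
  forall i j, (i <= j)%N -> (mu j <= mu i)%N.
Proof.
move=> h i j hij; rewrite -(subnKC hij); elim: (j - i)%N => [|d IH].
  by rewrite addn0.
by rewrite addnS (leq_trans (h _)).
Qed.

Lemma cumsum_M (R : pzRingType) (m n : nat) (mu : nat -> nat)
  (hmu : forall i, (mu i.+1 <= mu i)%N) (h0 : (mu 0 < n)%N) (p : 'I_m * 'I_n) :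
  cumsum (Mmat R m n mu) p = ((mu p.1 <= p.2)%N)%:R.
Proof.
have hlt : forall i, (mu i < n)%N.
  by move=> i; apply: leq_ltn_trans h0; apply: part_mono.
rewrite /cumsum; apply: (@tele _ _ _ (fun k => ((mu k <= p.2)%N)%:R)); last exact: ltn_ord.
move=> i; rewrite /Mmat.
under eq_bigr do rewrite mxE.
case: eqP => [e|ne].
  by rewrite (sum_ind _ _ _ _ (hlt 0%N)) subr0 e.
case: ltnP => hl.
  by rewrite sumrB (sum_ind _ _ _ _ (hlt i)) (sum_ind _ _ _ _ (hlt i.-1)).
have e : mu i.-1 = mu i.
  apply/eqP; rewrite eqn_leq hl; case: (nat_of_ord i) ne => // k _; exact: hmu.
by rewrite big1 // e subrr.
Qed.

Lemma cumsum_lin (R : pzRingType) (m n k : nat) (w : 'I_k -> R) (A : 'I_k -> 'M[R]_(m, n)) p :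
  cumsum (\sum_(t < k) w t *: A t) p = \sum_(t < k) w t * cumsum (A t) p.
Proof.
rewrite /cumsum.
transitivity (\sum_(i < m | (i <= p.1)%N) \sum_(j < n | (j <= p.2)%N) \sum_(t < k) w t * A t i j).
  apply: eq_bigr => i _; apply: eq_bigr => j _; rewrite summxE.
  by apply: eq_bigr => t _; rewrite mxE.
transitivity (\sum_(t < k) \sum_(i < m | (i <= p.1)%N) \sum_(j < n | (j <= p.2)%N) w t * A t i j); last first.
  apply: eq_bigr => t _; rewrite mulr_sumr; apply: eq_bigr => i _.
  by rewrite mulr_sumr.
under eq_bigr do rewrite exchange_big.
by rewrite exchange_big.
Qed.

Theorem mainTheorem4 (R : realFieldType) (m n : nat) (lam nu : nat -> nat) :
  (1 <= m)%N -> (1 <= n)%N ->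
  is_partition lam -> is_partition nu ->
  part_sub lam nu -> part_in_box nu n.-1 m.-1 ->
  forall X : 'M[R]_(m, n), @in_PASM R m n lam nu X ->
  in_order_polytope (@in_skew m n lam nu) (@pos_le m n) (Psi X).
Proof.
move=> hm hn _ _ _ [hnu0 _] X [k [mus [w [hw hs hmus ->]]]].
have key : forall p, Psi (\sum_(t < k) w t *: Mmat R m n (mus t)) p
    = \sum_(t < k) w t * ((mus t p.1 <= p.2)%N)%:R.
  move=> p; rewrite /Psi cumsum_lin; apply: eq_bigr => t _.
  have [[hdec _] [_ hsub]] := hmus t.
  rewrite cumsum_M //; apply: leq_ltn_trans (hsub 0%N) _.
  by apply: leq_ltn_trans hnu0 _; rewrite prednK.
split.
  move=> p _; rewrite key; apply/andP; split.
    by apply: sumr_ge0 => t _; apply: mulr_ge0.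
  rewrite -[X in _ <= X]hs; apply: ler_sum => t _; apply: ler_piMr => //.
  by rewrite lern1 leq_b1.
move=> p q _ _ /andP[h1 h2]; rewrite !key; apply: ler_sum => t _.
apply: ler_wpM2l => //; rewrite ler_nat.
have [[hdec _] _] := hmus t.
case h: (mus t p.1 <= p.2)%N => //.
have -> // : (mus t q.1 <= q.2)%N.
exact: leq_trans (part_mono _ hdec _ _ h1) (leq_trans h h2).
Qed.
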